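(* For every graph $G$, $1\le \operatorname{zir}(G)\le \operatorname{Z}(G)\le \overline{\operatorname{Z}}(G)\le \operatorname{ZIR}(G)$.
   Context: Graphs are simple, finite, undirected, with nonempty vertex set. Zero forcing: a blue vertex $u$ changes a white vertex $w$ to blue if $w$ is the only white neighbor of $u$; $B$ is a zero forcing set if starting from blue set $B$ eventually all vertices are blue. $\operatorname{Z}(G)$ is the minimum cardinality of a zero forcing set; $\overline{\operatorname{Z}}(G)$ is the maximum cardinality of a minimal (under inclusion) zero forcing set. A nonempty $F\subseteq V(G)$ is a fort if every $v\notin F$ satisfies $|N(v)\cap F|\ne1$. For $S\subseteq V(G)$, $x\in S$, a private fort of $x$ relative to $S$ is a fort $F$ with $S\cap F=\{x\}$. $S$ is a ZIr-set if every element of $S$ has a private fort relative to $S$. $\operatorname{zir}(G)$ (resp. $\operatorname{ZIR}(G)$) is the minimum (resp. maximum) cardinality of a maximal (under inclusion) ZIr-set of $G$. *)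

(* Defs.v *)
(* A simple graph is a finite type T of vertices with an
   irreflexive symmetric adjacency relation e. *)
From mathcomp Require Import all_boot.
Set Implicit Arguments. Unset Strict Implicit. Unset Printing Implicit Defensive.

Section ZeroForcing.
Variables (T : finType) (e : rel T).

Definition nbhd (v : T) : {set T} := [set u | e v u].

Definition zf_step (B : {set T}) : {set T} :=
  B :|: [set w | [exists u in B, e u w && [forall v, (e u v && (v != w)) ==> (v \in B)]]].

(* final colouring; #|T| rounds suffice since each productive round adds a vertex *)
Definition zf_closure (B : {set T}) : {set T} := iter #|T| zf_step B.

Definition zero_forcing_set (B : {set T}) : bool := zf_closure B == setT.

(* Z(G): minimum cardinality of a zero forcing set (V(G) is one, so #|T| is a
   valid neutral element) *)
Definition Zf : nat :=
  \big[minn/#|T|]_(B : {set T} | zero_forcing_set B) #|B|.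

Definition Zbar : nat :=
  \max_(B : {set T} | minset zero_forcing_set B) #|B|.

Definition fort (F : {set T}) : bool :=
  (F != set0) && [forall v, (v \notin F) ==> (#|nbhd v :&: F| != 1)].

Definition private_fort (S : {set T}) (x : T) (F : {set T}) : bool :=
  fort F && (S :&: F == [set x]).

Definition ZIr_set (S : {set T}) : bool :=
  [forall x in S, exists F : {set T}, private_fort S x F].

(* zir(G): min cardinality of an inclusion-maximal ZIr-set (they exist since
   set0 is a ZIr-set, and have size <= #|T|) *)
Definition zir : nat :=
  \big[minn/#|T|]_(S : {set T} | maxset ZIr_set S) #|S|.

Definition ZIR : nat :=
  \max_(S : {set T} | maxset ZIr_set S) #|S|.

End ZeroForcing.

(* Main.v *)
Require Import Defs.
From mathcomp Require Import all_boot.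
Set Implicit Arguments. Unset Strict Implicit. Unset Printing Implicit Defensive.

Section S.
Variables (T : finType) (e : rel T).
Implicit Types B F : {set T}.

Lemma step_ext B : B \subset zf_step e B.
Proof. exact: subsetUl. Qed.

Lemma iter_ext k B : B \subset iter k (zf_step e) B.
Proof.
elim: k => [|k IH] /=; first exact: subxx.
exact: subset_trans IH (step_ext _).
Qed.

Lemma iter_fix B j : iter j (zf_step e) B = iter j.+1 (zf_step e) B ->
  forall m, j <= m -> iter m (zf_step e) B = iter j (zf_step e) B.
Proof.
move=> H; elim=> [|m IH]; first by rewrite leqn0 => /eqP ->.
rewrite leq_eqVlt => /orP[/eqP Ej|]; first by rewrite Ej.
rewrite ltnS => /IH Hm.
by rewrite /= Hm; symmetry; exact: H.
Qed.

Lemma iter_grow B k : (exists2 j, j < k & iter j (zf_step e) B = iter j.+1 (zf_step e) B)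
  \/ k <= #|iter k (zf_step e) B|.
Proof.
elim: k => [|k [[j Hj Hq]|IH]]; [by right| left; exists j => //; exact: ltnW|].
case: (eqVneq (iter k (zf_step e) B) (iter k.+1 (zf_step e) B)) => Hk.
  by left; exists k.
right; have: iter k (zf_step e) B \proper iter k.+1 (zf_step e) B.
  by rewrite properEneq Hk step_ext.
by move/proper_card => H; exact: leq_ltn_trans IH H.
Qed.

Lemma closure_fix B : zf_step e (zf_closure e B) = zf_closure e B.
Proof.
rewrite /zf_closure; case: (iter_grow B #|T|) => [[j Hj Hq]|H].
  have h1 := iter_fix Hq (ltnW Hj).
  have h2 := iter_fix Hq (ltnW (ltnW Hj : j < #|T|.+1)).
  by rewrite -[zf_step e _]/(iter #|T|.+1 (zf_step e) B) h2 h1.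
have -> : iter #|T| (zf_step e) B = setT.
  by apply/eqP; rewrite eqEcard subsetT cardsT.
by apply/eqP; rewrite eqEsubset subsetT step_ext.
Qed.

Lemma step_avoid F B : fort e F -> (forall x, x \in B -> x \notin F) ->
  forall x, x \in zf_step e B -> x \notin F.
Proof.
move=> /andP[_ /forallP fF] dBF w; rewrite in_setU => /orP[/dBF //|].
rewrite inE => /existsP[u /andP[uB /andP[euw /forallP Hu]]].
apply/negP => wF.
have := fF u; rewrite (dBF _ uB) /= => /negP; apply; apply/eqP.
have -> : nbhd e u :&: F = [set w].
  apply/setP => v; rewrite !inE; case: (eqVneq v w) => [->|nvw]; first by rewrite euw wF.
  apply/negP => /andP[euv vF]; have := Hu v; rewrite euv nvw /= => vB.
  by move: (dBF _ vB); rewrite vF.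
by rewrite cards1.
Qed.

Lemma zfs_meets B F : zero_forcing_set e B -> fort e F -> B :&: F != set0.
Proof.
move=> /eqP zB fF; apply/negP => /eqP BF.
have dB : forall x, x \in B -> x \notin F.
  move=> x xB; apply/negP => xF; move/setP: BF => /(_ x); by rewrite !inE xB xF.
have dk : forall k x, x \in iter k (zf_step e) B -> x \notin F.
  elim=> [|k IH] /=; [exact: dB | exact: step_avoid fF IH].
move: (fF) => /andP[/set0Pn[x xF] _].
have : x \in zf_closure e B by rewrite zB inE.
by move/dk; rewrite xF.
Qed.

Lemma notzfs_fort B : ~~ zero_forcing_set e B -> exists F, fort e F && (B :&: F == set0).
Proof.
move=> nz; exists (~: zf_closure e B); apply/andP; split.
  apply/andP; split.
    by apply/set0Pn; move: nz; rewrite /zero_forcing_set eqEsubset subsetT /= =>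
      /subsetPn[x _ xC]; exists x; rewrite inE.
  apply/forallP => v; apply/implyP; rewrite inE negbK => vC; apply/negP => /cards1P[w Hw].
  have wN : w \in nbhd e v :&: ~: zf_closure e B by rewrite Hw inE.
  move: (wN); rewrite !inE => /andP[evw wC].
  have : w \in zf_step e (zf_closure e B).
    rewrite in_setU; apply/orP; right; rewrite inE; apply/existsP; exists v.
    rewrite vC evw /=; apply/forallP => u; apply/implyP => /andP[evu nuw].
    apply/negPn/negP => uC.
    have : u \in nbhd e v :&: ~: zf_closure e B by rewrite !inE evu uC.
    by rewrite Hw inE (negbTE nuw).
  by rewrite closure_fix (negbTE wC).
apply/eqP/setP => x; rewrite !inE; apply/negP => /andP[xB].
by rewrite (subsetP (iter_ext _ _) _ xB).
Qed.

Lemma minzfs_maxzir B : minset (zero_forcing_set e) B -> maxset (ZIr_set e) B.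
Proof.
move=> /minsetP[zB minB]; apply/maxsetP; split.
  apply/forallP => x; apply/implyP => xB.
  have : ~~ zero_forcing_set e (B :\ x).
    apply/negP => zB'; have := minB _ zB' (subD1set B x) => /setP/(_ x).
    by rewrite !inE eqxx xB.
  move=> /notzfs_fort[F /andP[fF /eqP BF]]; apply/existsP; exists F.
  rewrite /private_fort fF /=; apply/eqP/setP => y; rewrite !inE.
  case: (eqVneq y x) => [->|nyx] /=.
    rewrite xB /=; apply/negPn/negP => xF.
    move/set0Pn: (zfs_meets zB fF) => [z]; rewrite inE => /andP[zB2 zF].
    case: (eqVneq z x) => [Ezx|nzx].
      by move: zF; rewrite Ezx (negbTE xF).
    have : z \in (B :\ x) :&: F by rewrite !inE nzx zB2 zF.
    by rewrite BF inE.
  apply/negP => /andP[yB yF]; have : y \in (B :\ x) :&: F by rewrite !inE nyx yB yF.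
  by rewrite BF inE.
move=> S zS BS; apply/eqP; rewrite eqEsubset BS andbT; apply/subsetP => y yS.
apply/negPn/negP => yB.
move: zS => /forallP/(_ y); rewrite yS /= => /existsP[F /andP[fF /eqP SF]].
have := zfs_meets zB fF => /set0Pn[z]; rewrite inE => /andP[zB2 zF].
have : z \in S :&: F by rewrite inE (subsetP BS _ zB2) zF.
rewrite SF inE => /eqP Ezy; by rewrite -Ezy zB2 in yB.
Qed.

Lemma setT_zfs : zero_forcing_set e setT.
Proof.
rewrite /zero_forcing_set eqEsubset subsetT /=; exact: iter_ext.
Qed.

End S.

Lemma bigmin_le (I : finType) (P : pred I) (F : I -> nat) x i :
  P i -> \big[minn/x]_(j | P j) F j <= F i.
Proof.
move=> Pi; rewrite -big_filter.
have : i \in [seq j <- index_enum I | P j] by rewrite mem_filter Pi mem_index_enum.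
elim: (filter _ _) => // a r IH; rewrite inE big_cons => /orP[/eqP ->|/IH H].
  exact: geq_minl.
exact: leq_trans (geq_minr _ _) H.
Qed.

Theorem corollary2p3 (T : finType) (e : rel T) :
  symmetric e -> irreflexive e -> 0 < #|T| ->
  [/\ 1 <= zir e, zir e <= Zf e, Zf e <= Zbar e & Zbar e <= ZIR e].
Proof.
move=> _ _ T0.
have [x _] : exists x : T, true by move/card_gt0P: T0 => [x _]; exists x.
have zirT : zir e <= #|T|.
  apply: (big_ind (fun n => n <= #|T|)) => //.
    by move=> a b Ha _; exact: leq_trans (geq_minl _ _) Ha.
  by move=> S _; exact: max_card.
have [B0 mB0 _] := minset_exists (setT_zfs e).
split.
- apply: (big_ind (fun n => 1 <= n)) => //.
    by move=> a b Ha Hb; rewrite leq_min Ha Hb.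
  move=> S mS; rewrite lt0n; apply/negP => /eqP/cards0_eq S0.
  have zx : ZIr_set e [set x].
    apply/forallP => y; apply/implyP; rewrite inE => /eqP ->.
    apply/existsP; exists setT; rewrite /private_fort setIT eqxx andbT.
    apply/andP; split; first by apply/set0Pn; exists x; rewrite inE.
    by apply/forallP => v; rewrite inE.
  have := maxsetsup mS zx; rewrite S0 sub0set => /(_ isT)/setP/(_ x).
  by rewrite !inE eqxx.
- apply: (big_ind (fun n => zir e <= n)) => //.
    by move=> a b Ha Hb; rewrite leq_min Ha Hb.
  move=> B zB; have [B' mB' sB] := minset_exists zB.
  apply: leq_trans (subset_leq_card sB).
  exact: bigmin_le (minzfs_maxzir mB').
- apply: leq_trans (bigmin_le _ _ (minsetp mB0)) _.
  exact: leq_bigmax_cond.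
- apply/bigmax_leqP => B mB.
  exact: leq_bigmax_cond (minzfs_maxzir mB).
Qed.
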